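(* Let $H\in(0,1)$ and let $B^H$ be a fractional Brownian motion on $[0,1]$ with Hurst index $H$. For all $k\ge1$ and $j=0,1,\dots,2^{k-1}-1$, $$\mathbb{V}\bigl(B^H(t^k_{2j+1})\,\big|\,\mathbf{B}^H_{k-1}\bigr)\le 2\cdot 2^{-2kH},$$ where $\mathbf{B}^H_{k-1}=(B^H(t^{k-1}_0),\dots,B^H(t^{k-1}_{2^{k-1}}))$ and the left side is the (deterministic) conditional variance.
   Context: A fractional Brownian motion with Hurst index $H$ is a centered Gaussian process with $B^H(0)=0$ and covariance $\mathbb{E}[B^H(s)B^H(t)]=\tfrac12(|s|^{2H}+|t|^{2H}-|s-t|^{2H})$. $t^n_i=i/2^n$. *)

(* Defs.v *)
From HB Require Import structures.
From mathcomp Require Import all_boot all_order all_algebra.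
From mathcomp Require Import all_classical all_reals all_analysis.
Set Implicit Arguments. Unset Strict Implicit. Unset Printing Implicit Defensive.
Import Order.TTheory GRing.Theory Num.Theory.
Local Open Scope classical_set_scope.
Local Open Scope ring_scope.

Definition fbm_cov {R : realType} (H : R) (s t : R) : R :=
  (`|s| `^ (2 * H) + `|t| `^ (2 * H) - `|s - t| `^ (2 * H)) / 2.

Definition dyad {R : realType} (n i : nat) : R := i%:R / (2 ^+ n).

(* For jointly Gaussian
   centered vectors the conditional variance is deterministic and equals the
   mean-square error of the best linear predictor:
     inf_a E[(X(x) - sum_i a_i X(y_i))^2]
   which, expanded through the covariance, is the quantity below. *)
Definition gauss_cond_var {R : realType} (C : R -> R -> R) (x : R)
    (m : nat) (y : 'I_m -> R) : R :=
  inf [set v | exists a : 'I_m -> R,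
     v = C x x - 2 * (\sum_(i < m) a i * C x (y i))
         + \sum_(i < m) \sum_(j < m) a i * a j * C (y i) (y j)].

(* Main.v *)
Require Import Defs.
From HB Require Import structures.
From mathcomp Require Import all_boot all_order all_algebra.
From mathcomp Require Import all_classical all_reals all_analysis.
From mathcomp Require Import ring lra.
Import Order.TTheory GRing.Theory Num.Theory.
Local Open Scope ring_scope.

Theorem lemma1 (R : realType) (H : R) (hH0 : 0 < H) (hH1 : H < 1)
    (k j : nat) (hk : (1 <= k)%N) (hj : (j < 2 ^ k.-1)%N) :
  gauss_cond_var (fbm_cov H) (dyad k (2 * j + 1))
    (fun i : 'I_(2 ^ k.-1).+1 => dyad k.-1 i)
  <= 2 * (2 `^ (- (2 * k%:R * H))).
Proof.
set x := dyad k (2 * j + 1).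
set y := fun i : 'I_(2 ^ k.-1).+1 => dyad k.-1 i.
rewrite /gauss_cond_var; match goal with |- context[inf ?E] => set S := E end.
have hpos : 0 < 2 `^ (- (2 * k%:R * H)) :> R by apply: powR_gt0.
have hjj : (j < (2 ^ k.-1).+1)%N by apply: ltnW.
pose j0 : 'I_(2 ^ k.-1).+1 := Ordinal hjj.
pose a : 'I_(2 ^ k.-1).+1 -> R := fun i => (i == j0)%:R.
have ha : forall F : 'I_(2 ^ k.-1).+1 -> R, \sum_i a i * F i = F j0.
  move=> F; rewrite (bigD1 j0) //= big1 ?addr0; first by rewrite /a eqxx mul1r.
  by move=> i /negbTE hi; rewrite /a hi mul0r.
have Sv : S (fbm_cov H x x - 2 * fbm_cov H x (y j0) + fbm_cov H (y j0) (y j0)).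
  exists a; rewrite ha.
  under eq_bigr => i _ do under eq_bigr => l _ do rewrite mulrAC mulrC.
  under eq_bigr => i _ do rewrite ha.
  by rewrite ha.
have hval : fbm_cov H x x - 2 * fbm_cov H x (y j0) + fbm_cov H (y j0) (y j0)
    = 2 `^ (- (2 * k%:R * H)).
  have h2H : (2 * H) != 0 by rewrite mulf_neq0 // gt_eqF.
  rewrite /fbm_cov !subrr normr0 powR0 //.
  have -> : x - y j0 = (2 ^+ k)^-1.
    rewrite /x /y /dyad /=.
    case: k hk {hj ha hjj j0 a Sv hpos x y S} => // k' _ /=.
    rewrite exprS natrD natrM; field; by rewrite expf_neq0.
  have -> : `|(2 ^+ k)^-1 : R| = 2 `^ (- k%:R).
    by rewrite ger0_norm ?invr_ge0 ?exprn_ge0 // powRN powR_mulrn.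
  rewrite -powRrM.
  set e := (2 `^ _ : R); set f := (2 `^ _ : R).
  have -> : f = e by rewrite /e /f; congr (_ `^ _); ring.
  by field.
case: (pselect (has_lbound S)) => hb.
  apply: le_trans (_ : _ <= 2 `^ (- (2 * k%:R * H))) _.
    by rewrite -hval; exact: (ge_inf hb Sv).
  by rewrite ler_pMl // ler1n.
have -> : inf S = 0.
  apply: inf_out => -[_ hl]; exact: hb.
by rewrite ltW // mulr_gt0.
Qed.
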